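(* Let $\chi\in\sum_{1\leq s\leq r-1}\mathcal B\otimes\land^sW\otimes\land^{r-s}W$ for some $r\geq3$. If $\alpha(\chi)+\beta(\chi)=\gamma(\chi)+\delta(\chi)$, then $\chi=\sum_I b_I(S_I-w_I-w'_I)$ for suitable $b_I\in\mathcal B$, where the sum runs over strictly increasing sequences $I=(i_1<i_2<\cdots<i_r)$ of indices.
   Context: $\mathcal B$ is a graded commutative algebra over $\mathbb Q$ and $W$ a graded rational vector space concentrated in odd degrees with basis $\{w_i\}$ indexed by a totally ordered set. In $\mathcal B\otimes\land W\otimes\land W$ write $w=1\otimes w\otimes 1$, $w'=1\otimes1\otimes w$, and in $\mathcal B\otimes\land W\otimes\land W\otimes\land W$ write $w,w',w''$ for $w$ in the first, second, third copy. Define algebra maps $\alpha,\beta,\gamma,\delta\colon\mathcal B\otimes\land W\otimes\land W\to\mathcal B\otimes\land W\otimes\land W\otimes\land W$, each the identity on $\mathcal B$, by: $\alpha(w)=w,\ \alpha(w')=w'$; $\beta(w)=w+w',\ \beta(w')=w''$; $\gamma(w)=w,\ \gamma(w')=w'+w''$; $\delta(w)=w',\ \delta(w')=w''$. For $I=(i_1,\dots,i_r)$ write $w_I=w_{i_1}\cdots w_{i_r}$, $w'_I=w'_{i_1}\cdots w'_{i_r}$, and $S_I=(w_{i_1}+w'_{i_1})\cdots(w_{i_r}+w'_{i_r})$. *)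

(* Defs.v *)
From HB Require Import structures.
From mathcomp Require Import all_boot all_order all_algebra.
Set Implicit Arguments. Unset Strict Implicit. Unset Printing Implicit Defensive.
Import Order.TTheory GRing.Theory.

(* The graded tensor product  B (x) /\W (x) ... (x) /\W  (k copies) is
   identified, as usual, with B (x) /\(W + ... + W): a generator of copy c with
   index i is the pair (c, i) : nat * T.  A "word" (seq (nat * T)) denotes the
   product of its generators in order.  An element is represented by a finite
   formal list of terms (b, word) meaning  sum b * word.  The basis of the
   exterior algebra is given by strictly increasing words for the lexicographic
   order (copy first, then index); a word with distinct letters equals
   (-1)^(#inversions) times its sorted version, and a word with a repeated
   letter is 0 (generators are odd).  Thus w_I w'_J corresponds to the sorted
   word [(0,i1);..;(0,ip);(1,j1);..;(1,jq)] = basis element b (x) w_I (x) w_J. *)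

Definition ltg d (T : orderType d) (a b : nat * T) : bool :=
  (a.1 < b.1)%N || ((a.1 == b.1) && (a.2 < b.2)%O).

Fixpoint ninv d (T : orderType d) (w : seq (nat * T)) : nat :=
  match w with
  | [::] => 0%N
  | x :: w' => (count (fun y => ltg y x) w' + ninv w')%N
  end.

Definition ext_elt (B : Type) d (T : orderType d) := seq (B * seq (nat * T)).

(* coefficient of the basis monomial K (K a strictly increasing word) *)
Definition coef (B : zmodType) d (T : orderType d) (x : ext_elt B T)
    (K : seq (nat * T)) : B :=
  (\sum_(p <- x)
     (if uniq p.2 && perm_eq p.2 K
      then (if odd (ninv p.2) then - p.1 else p.1) else 0))%R.

Definition ext_eq (B : zmodType) d (T : orderType d) (x y : ext_elt B T) : Prop :=
  forall K, coef x K = coef y K.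

(* algebra map, identity on B, sending a generator of copy c with index i to
   the sum over c' in f c of the generator of copy c' with index i *)
Fixpoint expand d (T : orderType d) (f : nat -> seq nat) (w : seq (nat * T))
  : seq (seq (nat * T)) :=
  match w with
  | [::] => [:: [::]]
  | x :: w' => flatten [seq [seq (c, x.2) :: u | u <- expand f w'] | c <- f x.1]
  end.

Definition amap (B : Type) d (T : orderType d) (f : nat -> seq nat)
    (x : ext_elt B T) : ext_elt B T :=
  flatten [seq [seq (p.1, u) | u <- expand f p.2] | p <- x].

(* alpha(w) = w, alpha(w') = w' *)
Definition alpha_f (c : nat) : seq nat :=
  if c == 0%N then [:: 0%N] else if c == 1%N then [:: 1%N] else [::].
(* beta(w) = w + w', beta(w') = w'' *)
Definition beta_f (c : nat) : seq nat :=
  if c == 0%N then [:: 0%N; 1%N] else if c == 1%N then [:: 2%N] else [::].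
(* gamma(w) = w, gamma(w') = w' + w'' *)
Definition gamma_f (c : nat) : seq nat :=
  if c == 0%N then [:: 0%N] else if c == 1%N then [:: 1%N; 2%N] else [::].
(* delta(w) = w', delta(w') = w'' *)
Definition delta_f (c : nat) : seq nat :=
  if c == 0%N then [:: 1%N] else if c == 1%N then [:: 2%N] else [::].

(* x lies in  sum_{1<=s<=r-1} B (x) /\^s W (x) /\^(r-s) W :
   every term is b * (word in copies 0,1 with s letters of copy 0 and
   r-s letters of copy 1, 1 <= s <= r-1) *)
Definition in_mid_sum (B : Type) d (T : orderType d) (r : nat)
    (x : ext_elt B T) : bool :=
  all (fun p => [&& size p.2 == r,
                    all (fun g => (g.1 <= 1)%N) p.2
                  & (0 < count (fun g => g.1 == 0%N) p.2 < r)%N]) x.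

Definition SI_term (B : zmodType) d (T : orderType d) (b : B) (I : seq T)
  : ext_elt B T :=
  amap (fun c => if c == 0%N then [:: 0%N; 1%N] else [::])
       [:: (b, [seq (0%N, i) | i <- I])]
  ++ [:: ((- b)%R, [seq (0%N, i) | i <- I]); ((- b)%R, [seq (1%N, i) | i <- I])].

Definition graded_comm (B : algType rat) (Bd : int -> {pred B}) : Prop :=
  (forall n, (0 : B)%R \in Bd n) /\
      (forall n (x y : B), x \in Bd n -> y \in Bd n -> (x + y)%R \in Bd n) /\
      (forall n (a : rat) (x : B), x \in Bd n -> (a *: x)%R \in Bd n) /\
      (1 : B)%R \in Bd 0%R /\
      (forall m n (x y : B), x \in Bd m -> y \in Bd n -> (x * y)%R \in Bd (m + n)%R) /\
      (forall m n (x y : B), x \in Bd m -> y \in Bd n ->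
         (x * y)%R = (if odd `|m|%N && odd `|n|%N then - (y * x) else y * x)%R) /\
      (forall x : B, exists (s : seq int) (comp : int -> B),
          (forall n, comp n \in Bd n) /\ x = (\sum_(n <- s) comp n)%R) /\
      (forall (s : seq int) (comp : int -> B), uniq s ->
          (forall n, comp n \in Bd n) -> (\sum_(n <- s) comp n)%R = 0%R ->
          forall n, n \in s -> comp n = 0%R).

(* Main.v *)
Require Import Defs.
From HB Require Import structures.
From mathcomp Require Import all_boot all_order all_algebra.
From mathcomp Require Import zify.
Set Implicit Arguments. Unset Strict Implicit. Unset Printing Implicit Defensive.
Import Order.TTheory GRing.Theory.

Section Aux.
Variables (d : Order.disp_t) (T : orderType d).
Local Notation G := (nat * T)%type.
Local Notation ltb a := (fun y : nat * T => ltg y a).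

Lemma ltg_irr (a : G) : ltg a a = false.
Proof. by rewrite /ltg ltnn ltxx andbF. Qed.

Lemma ltg_asym (a b : G) : ltg a b -> ltg b a = false.
Proof.
case: a b => [a1 a2] [b1 b2]; rewrite /ltg /=.
by case: (ltngtP a1 b1) => // _ /lt_gtF.
Qed.

Lemma ltg_total (a b : G) : a != b -> ltg a b || ltg b a.
Proof.
case: a b => [a1 a2] [b1 b2]; rewrite /ltg /=.
case: (ltngtP a1 b1) => // e h.
case: (ltgtP a2 b2) => // e2; by rewrite e e2 eqxx in h.
Qed.

Lemma ltg_trans (b a c : G) : ltg a b -> ltg b c -> ltg a c.
Proof.
case: a b c => [a1 a2] [b1 b2] [c1 c2]; rewrite /ltg /=.
move=> /orP[h1|/andP[/eqP e1 h1]] /orP[h2|/andP[/eqP e2 h2]].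
- by rewrite (ltn_trans h1 h2).
- by rewrite -e2 h1.
- by rewrite e1 h2.
- by rewrite e1 e2 eqxx (lt_trans h1 h2) orbT.
Qed.

Lemma count_lt_split (a : G) (P : seq G) : a \notin P ->
  (count (ltb a) P + count (ltg a) P)%N = size P.
Proof.
elim: P => //= y P IH; rewrite inE negb_or => /andP[ny nP].
rewrite addnACA IH //.
case: (boolP (ltg a y)) => h; first by rewrite (ltg_asym h).
by have := ltg_total ny; rewrite (negbTE h) /= => ->.
Qed.

Fixpoint cross (s t : seq G) : nat :=
  match s with [::] => 0%N | y :: s' => (count (ltb y) t + cross s' t)%N end.

Lemma ninv_cat (s t : seq G) : ninv (s ++ t) = (ninv s + ninv t + cross s t)%N.
Proof. by elim: s => [|y s IH] /=; [lia | rewrite count_cat IH; lia]. Qed.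

Lemma cross_cons_r s (a : G) t : cross s (a :: t) = (count (ltg a) s + cross s t)%N.
Proof. by elim: s => [|y s IH] /=; [lia | rewrite IH; lia]. Qed.

Lemma cross_cat_r s t1 t2 : cross s (t1 ++ t2) = (cross s t1 + cross s t2)%N.
Proof. by elim: s => [|y s IH] /=; [lia | rewrite IH count_cat; lia]. Qed.

Lemma PL (a : G) (P Q : seq G) : a \notin P -> exists k,
  (ninv (P ++ a :: Q) + count (ltb a) (P ++ a :: Q) =
   ninv (P ++ Q) + size P + 2 * k)%N.
Proof.
move=> aP; exists (count (ltb a) Q).
rewrite !ninv_cat cross_cons_r /= count_cat /= ltg_irr.
have := count_lt_split aP; lia.
Qed.

Lemma L2 (x : G) (P Q R : seq G) : x \notin Q -> exists k,
  (ninv (P ++ Q ++ x :: R) + ninv (P ++ x :: Q ++ R) = size Q + 2 * k)%N.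
Proof.
move=> xQ.
have h1 := ninv_cat P (Q ++ x :: R).
have h2 := ninv_cat P (x :: Q ++ R).
have h3 := ninv_cat Q (x :: R).
have h4 := ninv_cat Q R.
rewrite /= in h2.
rewrite cross_cat_r !cross_cons_r cross_cat_r in h1 h2.
rewrite cross_cons_r in h3.
rewrite count_cat in h2.
exists (ninv P + ninv Q + ninv R + count (ltb x) R + cross Q R + cross P Q + cross P R + count (ltg x) P)%N.
rewrite h1 h2 h3 h4 /=. have := count_lt_split xQ. lia.
Qed.


Lemma rem_cat_notin (a : G) (P Q : seq G) : a \notin P -> rem a (P ++ a :: Q) = P ++ Q.
Proof.
elim: P => /= [|y P IH]; first by rewrite eqxx.
rewrite inE negb_or => /andP[ay aP]; rewrite eq_sym (negbTE ay) IH //.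
Qed.

Lemma uniq_mid (x : G) (P Q : seq G) : uniq (P ++ x :: Q) = (x \notin P ++ Q) && uniq (P ++ Q).
Proof.
have /perm_uniq -> : perm_eq (P ++ x :: Q) (x :: P ++ Q).
  by rewrite -cat1s perm_catCA.
by [].
Qed.

Open Scope ring_scope.

Definition S (u L : seq G) : int :=
  if uniq u && perm_eq u L then (-1) ^+ ninv u else 0.

Lemma S_nuniq u L : ~~ uniq L -> S u L = 0.
Proof.
rewrite /S; case: ifP => // /andP[uu /perm_uniq]; rewrite uu => h.
by rewrite -h.
Qed.

Lemma S_perm u L L' : perm_eq L L' -> S u L = S u L'.
Proof.
move=> hL; rewrite /S.
have -> : perm_eq u L = perm_eq u L' by apply/idP/idP => h;
  [exact: perm_trans h hL | by apply: perm_trans h _; rewrite perm_sym].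
by [].
Qed.

Lemma S_ne0 u L : S u L != 0 -> uniq u /\ perm_eq u L.
Proof. by rewrite /S; case: ifP => // /andP[]. Qed.

Lemma S_nil L : S [::] L = if L is [::] then 1 else 0.
Proof.
case: L => [|x L]; rewrite /S; first by [].
by case: ifP => // /andP[_ h]; have := perm_size h.
Qed.

Lemma S_cons y v L : S (y :: v) L =
  if uniq L && (y \in L) then (-1) ^+ count (ltb y) L * S v (rem y L) else 0.
Proof.
rewrite /S.
case uL: (uniq L); last first.
  by case: ifP => // /andP[u /perm_uniq]; rewrite u uL.
case yL: (y \in L); last first.
  by case: ifP => // /andP[_ /perm_mem /(_ y)]; rewrite inE eqxx yL.
have pL := perm_to_rem yL.
have -> : perm_eq (y :: v) L = perm_eq v (rem y L).
  rewrite -(perm_cons y v (rem y L)); apply/idP/idP => h;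
    [exact: perm_trans h pL | by apply: perm_trans h _; rewrite perm_sym].
case pv: (perm_eq v (rem y L)); rewrite ?andbF ?mulr0 //=.
have ur : uniq (rem y L) := rem_uniq y uL.
have -> : uniq v by rewrite (perm_uniq pv).
have -> : y \notin v by rewrite (perm_mem pv) mem_rem_uniqF.
rewrite /= exprD; congr (_ * _).
rewrite (permP pv) (permP pL) /= ltg_irr.
by [].
Qed.

Definition N (f : nat -> seq nat) (u K : seq G) : int :=
  \sum_(v <- expand f u) S v K.

Lemma N_nil f K : N f [::] K = S [::] K.
Proof. by rewrite /N /= big_seq1. Qed.

Lemma N_cons f x u K : N f (x :: u) K =
  \sum_(c <- f x.1) (if uniq K && ((c, x.2) \in K) then
     (-1) ^+ count (ltb (c, x.2)) K * N f u (rem (c, x.2) K) else 0).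
Proof.
rewrite /N /= big_flatten /= big_map; apply: eq_bigr => c _.
rewrite big_map; under eq_bigr do rewrite S_cons.
case: ifP => _; first by rewrite mulr_sumr.
by rewrite big1.
Qed.

Lemma sgn_mod m n : (m %% 2 = n %% 2)%N -> (-1) ^+ m = (-1) ^+ n :> int.
Proof. by rewrite !modn2 => h; rewrite -signr_odd h signr_odd. Qed.


Lemma map_cons' (A B : Type) (g : A -> B) y (s : seq A) : map g (y :: s) = g y :: map g s.
Proof. by []. Qed.

Lemma notin_pre (x : G) (P Q : seq G) : uniq (P ++ x :: Q) -> x \notin P.
Proof. by rewrite uniq_mid mem_cat negb_or => /andP[/andP[]]. Qed.

Lemma notin_post (x : G) (P Q : seq G) : uniq (P ++ x :: Q) -> x \notin Q.
Proof. by rewrite uniq_mid mem_cat negb_or => /andP[/andP[]]. Qed.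

Lemma all_sub (p : pred G) (s t : seq G) : all p s -> {subset t <= s} -> all p t.
Proof. by move=> /allP h sub; apply/allP => z /sub /h. Qed.

Section Master.
Variables (f : nat -> seq nat) (hp : nat -> bool) (pre : nat -> nat).
Hypothesis fspec : forall c c', (c' \in f c) = hp c' && (pre c' == c).
Hypothesis funiq : forall c, uniq (f c).
Hypothesis fsize : forall c, (size (f c) <= 2)%N.

Definition pl (a : G) : G := (pre a.1, a.2).
Definition phi (K : seq G) := map pl K.
Definition hpa (a : G) := hp a.1.
Definition sig (K : seq G) : int :=
  if all hpa K then (-1) ^+ (ninv K + ninv (phi K)) else 0.

Lemma sig_all K : all hpa K -> sig K = (-1) ^+ (ninv K + ninv (phi K)).
Proof. by rewrite /sig => ->. Qed.

Lemma TT u (IH : forall K, N f u K = sig K * S u (phi K)) x b b' P Q R :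
  uniq (P ++ b :: Q ++ b' :: R) -> all hpa (P ++ b :: Q ++ b' :: R) ->
  pl b = x -> pl b' = x -> x \notin phi Q ->
  (-1) ^+ count (ltb b) (P ++ b :: Q ++ b' :: R) * N f u (rem b (P ++ b :: Q ++ b' :: R))
  + (-1) ^+ count (ltb b') (P ++ b :: Q ++ b' :: R) * N f u (rem b' (P ++ b :: Q ++ b' :: R)) = 0.
Proof.
move=> uK hK hb hb' xQ.
have eK : P ++ b :: Q ++ b' :: R = (P ++ b :: Q) ++ b' :: R by rewrite -catA.
have bP : b \notin P := notin_pre uK.
have b'P : b' \notin P ++ b :: Q by apply: (@notin_pre b' _ R); rewrite -eK.
have e1 : rem b (P ++ b :: Q ++ b' :: R) = P ++ Q ++ b' :: R := rem_cat_notin (Q ++ b' :: R) bP.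
have e2 : rem b' (P ++ b :: Q ++ b' :: R) = P ++ b :: Q ++ R.
  by rewrite eK rem_cat_notin // -catA.
have a1 : all hpa (P ++ Q ++ b' :: R).
  by rewrite -e1; apply: (all_sub hK) => z /mem_rem.
have a2 : all hpa (P ++ b :: Q ++ R).
  by rewrite -e2; apply: (all_sub hK) => z /mem_rem.
rewrite e1 e2 !IH !sig_all //.
have p1 : phi (P ++ Q ++ b' :: R) = phi P ++ phi Q ++ x :: phi R.
  by rewrite /phi !map_cat map_cons' hb'.
have p2 : phi (P ++ b :: Q ++ R) = phi P ++ x :: phi Q ++ phi R.
  by rewrite /phi !map_cat map_cons' hb map_cat.
rewrite p1 p2.
have -> : S u (phi P ++ phi Q ++ x :: phi R) = S u (phi P ++ x :: phi Q ++ phi R).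
  apply: S_perm; rewrite perm_cat2l -(cat1s x (phi R)) perm_catCA.
  by [].
rewrite !mulrA -mulrDl -!exprD.
set e1' := (_ + _)%N.
set e2' := (_ + _)%N.
rewrite (@sgn_mod e1' e2'.+1) ?exprS ?mulN1r ?addNr ?mul0r //.
have [k1 h1] := PL (Q ++ b' :: R) bP.
have [k2 h2] := PL R b'P.
have [k3 h3] := L2 (phi P) (phi R) xQ.
rewrite -eK -catA cat_cons size_cat /= in h2.
rewrite /phi size_map in h3.
rewrite /e1' /e2'; move: h1 h2 h3; rewrite /phi.
set nK := ninv (P ++ b :: Q ++ b' :: R).
set cb := count _ (P ++ b :: Q ++ b' :: R).
set cb' := count (ltb b') (P ++ b :: Q ++ b' :: R).
set n1 := ninv (P ++ Q ++ b' :: R).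
set n2 := ninv (P ++ b :: Q ++ R).
set X1 := ninv (_ ++ _ ++ x :: _).
set X2 := ninv (_ ++ x :: _).
lia.
Qed.

Lemma N_formula u K : N f u K = sig K * S u (phi K).
Proof.
elim: u K => [|x u IH] K.
  rewrite N_nil !S_nil; case: K => [|a K]; first by rewrite /sig /= mulr1.
  by rewrite /phi /= mulr0.
case: x => x1 x2.
rewrite N_cons /=.
case uK: (uniq K); last first.
  rewrite big1 => [|c _] //; rewrite S_nuniq ?mulr0 //.
  by apply: contraFN uK; apply: map_uniq.
case hK: (all hpa K); last first.
  rewrite /sig hK mul0r big1_seq // => c /= cf; case: ifP => // aK.
  have hc : hp c by move: (fspec x1 c); rewrite cf => /esym /andP[].
  rewrite IH /sig.
  have -> : all hpa (rem (c, x2) K) = false.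
    apply: negbTE; apply: contraFN hK => h.
    by rewrite (perm_all _ (perm_to_rem aK)) /= h andbT.
  by rewrite mul0r mulr0.
rewrite -big_mkcond /= -big_filter.
set A := filter _ (f x1).
have memA c : (c \in A) = (c \in f x1) && ((c, x2) \in K) by rewrite mem_filter andbC.
have uA : uniq A := filter_uniq _ (funiq x1).
have sA : (size A <= 2)%N by rewrite size_filter (leq_trans (count_size _ _)).
have hx : forall b, b \in K -> pl b = (x1, x2) -> b.1 \in A.
  case=> b1 b2 bK [eb1 eb2]; rewrite memA /= -eb2 bK andbT fspec eb1 eqxx andbT.
  by move/allP: hK => /(_ _ bK).
have inA c : c \in A -> [/\ (c, x2) \in K, hp c & pre c = x1].
  rewrite memA fspec => /andP[/andP[hc /eqP pc] cK]; by split.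
have plc c : pre c = x1 -> pl (c, x2) = (x1, x2) by rewrite /pl /= => ->.
move: hx; case eA: A => [|c [|c' [|c'' A']]] hx.
-
  rewrite big_nil S_cons.
  have -> : (x1, x2) \in phi K = false.
    apply/negbTE/mapP => [[b bK eb]]; by have := hx b bK (esym eb).
  by rewrite andbF mulr0.
-
  have [aK hc pc] : [/\ (c, x2) \in K, hp c & pre c = x1] by apply: inA; rewrite eA mem_seq1.
  rewrite big_cons big_nil addr0 IH.
  have ha := plc c pc.
  move: uK hK hx; case/splitPr: aK => P Q uK hK hx.
  have aP := notin_pre uK; have aQ := notin_post uK.
  have onlya b : b \in P ++ (c, x2) :: Q -> pl b = (x1, x2) -> b = (c, x2).
    move=> bK eb; have := hx b bK eb; rewrite mem_seq1 => /eqP.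
    by case: b eb {bK} => b1 b2 /= [_ ->] ->.
  have xP : (x1, x2) \notin phi P.
    apply/mapP => [[b bP eb]].
    have bK : b \in P ++ (c, x2) :: Q by rewrite mem_cat bP.
    have eb' := onlya b bK (esym eb).
    by rewrite -eb' bP in aP.
  have xQ : (x1, x2) \notin phi Q.
    apply/mapP => [[b bQ eb]].
    have bK : b \in P ++ (c, x2) :: Q by rewrite mem_cat inE bQ !orbT.
    have eb' := onlya b bK (esym eb).
    by rewrite -eb' bQ in aQ.
  have phiK : phi (P ++ (c, x2) :: Q) = phi P ++ (x1, x2) :: phi Q.
    by rewrite /phi map_cat map_cons' ha.
  rewrite rem_cat_notin // S_cons phiK rem_cat_notin //.
  have -> : (x1, x2) \in phi P ++ (x1, x2) :: phi Q by rewrite mem_cat mem_head orbT.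
  rewrite andbT uniq_mid mem_cat negb_or xP xQ /=.
  have aPQ : all hpa (P ++ Q).
    apply: (all_sub hK) => z; rewrite !mem_cat inE => /orP[->|->] //; by rewrite !orbT.
  rewrite !sig_all // phiK.
  have -> : phi (P ++ Q) = phi P ++ phi Q by rewrite /phi map_cat.
  case uPQ: (uniq (phi P ++ phi Q)); last by rewrite S_nuniq ?uPQ // !mulr0.
  rewrite !mulrA -!exprD; congr (_ * _); apply: sgn_mod.
  have [k1 h1] := PL Q aP.
  have [k2 h2] := PL (phi Q) xP.
  move: h1 h2; rewrite /phi size_map.
  set nK := ninv (P ++ _ :: Q).
  set n1 := ninv (P ++ Q).
  set X := ninv (map pl P ++ _ :: map pl Q).
  set X1 := ninv (map pl P ++ map pl Q).
  set cK := count _ (P ++ _ :: Q).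
  set cX := count _ (map pl P ++ _ :: map pl Q).
  lia.
-
  have [aK hc pc] : [/\ (c, x2) \in K, hp c & pre c = x1] by apply: inA; rewrite eA inE eqxx.
  have [a'K hc' pc'] : [/\ (c', x2) \in K, hp c' & pre c' = x1] by apply: inA; rewrite eA !inE eqxx orbT.
  have cc' : c != c' by move: uA; rewrite eA /= inE andbT.
  have aa' : (c, x2) != (c', x2) by apply: contra cc' => /eqP [->].
  have ha := plc c pc; have ha' := plc c' pc'.
  rewrite big_cons big_seq1.
  have only2 b : b \in K -> pl b = (x1, x2) -> b = (c, x2) \/ b = (c', x2).
    move=> bK eb; have := hx b bK eb; rewrite !inE => /orP[] /eqP e; [left|right];
    by case: b eb {bK} e => b1 b2 /= [_ ->] ->.
  move: uK hK only2; case/splitPr: aK a'K => P Q a'K uK hK only2.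
  have a'a : ((c', x2) == (c, x2)) = false by rewrite eq_sym (negbTE aa').
  move: a'K; rewrite mem_cat inE a'a /=.
  have rhs0 (b b' : G) (P1 Q1 R1 : seq G) : pl b = (x1, x2) -> pl b' = (x1, x2) ->
      S ((x1, x2) :: u) (phi (P1 ++ b :: Q1 ++ b' :: R1)) = 0.
    move=> hb hb'; rewrite S_cons /phi !(map_cat, map_cons') hb hb' uniq_mid.
    by rewrite !mem_cat mem_head !orbT.
  have notin_mid (b : G) (P1 Q1 R1 : seq G) z : uniq (P1 ++ z :: Q1 ++ b :: R1) -> b \notin Q1.
    move=> h; have : uniq ((P1 ++ z :: Q1) ++ b :: R1) by rewrite -catA.
    by move/notin_pre; rewrite mem_cat inE !negb_or => /andP[_ /andP[]].
  case/orP => [a'P | a'Q].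
  + move: uK hK only2; case/splitPr: a'P => P1 P2.
    rewrite -catA cat_cons => uK hK only2.
    have xP2 : (x1, x2) \notin phi P2.
      apply/mapP => [[b bP eb]].
      have bK : b \in P1 ++ (c', x2) :: P2 ++ (c, x2) :: Q by rewrite !(mem_cat, inE) bP !orbT.
      case: (only2 b bK (esym eb)) => e; rewrite e in bP.
      * by move: (notin_mid _ _ _ _ _ uK); rewrite bP.
      * by move: (notin_post uK); rewrite mem_cat bP.
    by rewrite addrC (TT IH uK hK ha' ha xP2) rhs0 ?mulr0.
  + move: uK hK only2; case/splitPr: a'Q => Q1 Q2 uK hK only2.
    have xQ1 : (x1, x2) \notin phi Q1.
      apply/mapP => [[b bQ eb]].
      have bK : b \in P ++ (c, x2) :: Q1 ++ (c', x2) :: Q2 by rewrite !(mem_cat, inE) bQ !orbT.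
      case: (only2 b bK (esym eb)) => e; rewrite e in bQ.
      * by move: (notin_post uK); rewrite mem_cat bQ.
      * by move: (notin_mid _ _ _ _ _ uK); rewrite bQ.
    by rewrite (TT IH uK hK ha ha' xQ1) rhs0 ?mulr0.
-
  by move: sA; rewrite eA.
Qed.

End Master.

Lemma coef_S (B : zmodType) (x : ext_elt B T) K :
  coef x K = \sum_(p <- x) p.1 *~ S p.2 K.
Proof.
rewrite /coef; apply: eq_bigr => p _; rewrite /S; case: ifP => _; last by rewrite mulr0z.
by rewrite -signr_odd; case: odd; rewrite ?expr1 ?expr0 ?mulrN1z ?mulr1z.
Qed.

Lemma coef_cat (B : zmodType) (x y : ext_elt B T) K : coef (x ++ y) K = coef x K + coef y K.
Proof. by rewrite /coef big_cat. Qed.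

Lemma coef_flatten (B : zmodType) (xs : seq (ext_elt B T)) K :
  coef (flatten xs) K = \sum_(x <- xs) coef x K.
Proof. by rewrite /coef big_flatten. Qed.

Lemma coef_seq1 (B : zmodType) (b : B) u K : coef [:: (b, u)] K = b *~ S u K.
Proof. by rewrite coef_S big_seq1. Qed.

Lemma coef_amap (f : nat -> seq nat) (hp : nat -> bool) (pre : nat -> nat)
  (fspec : forall c c', (c' \in f c) = hp c' && (pre c' == c))
  (funiq : forall c, uniq (f c)) (fsize : forall c, (size (f c) <= 2)%N)
  (B : zmodType) (x : ext_elt B T) K :
  coef (amap f x) K = coef x (phi pre K) *~ sig hp pre K.
Proof.
rewrite coef_S /amap big_flatten /= big_map coef_S mulrz_suml.
apply: eq_bigr => p _; rewrite big_map /=.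
rewrite -mulrz_sumr -/(N f p.2 K) (N_formula fspec funiq fsize).
by rewrite mulrC mulrzA.
Qed.

End Aux.

Definition hp_a (c : nat) := (c <= 1)%N.
Definition pre_a (c : nat) := c.
Definition hp_b (c : nat) := (c <= 2)%N.
Definition pre_b (c : nat) := if c == 2 then 1%N else 0%N.
Definition hp_g (c : nat) := (c <= 2)%N.
Definition pre_g (c : nat) := if c == 0%N then 0%N else 1%N.
Definition hp_d (c : nat) := (1 <= c <= 2)%N.
Definition pre_d (c : nat) := c.-1.
Definition f0 (c : nat) : seq nat := if c == 0%N then [:: 0%N; 1%N] else [::].
Definition pre_0 (c : nat) := 0%N.

Lemma spec_a c c' : (c' \in alpha_f c) = hp_a c' && (pre_a c' == c).
Proof. by case: c => [|[|c]]; case: c' => [|[|[|c']]]. Qed.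
Lemma spec_b c c' : (c' \in beta_f c) = hp_b c' && (pre_b c' == c).
Proof. by case: c => [|[|c]]; case: c' => [|[|[|c']]]. Qed.
Lemma spec_g c c' : (c' \in gamma_f c) = hp_g c' && (pre_g c' == c).
Proof. by case: c => [|[|c]]; case: c' => [|[|[|c']]]. Qed.
Lemma spec_d c c' : (c' \in delta_f c) = hp_d c' && (pre_d c' == c).
Proof. by case: c => [|[|c]]; case: c' => [|[|[|c']]]. Qed.
Lemma spec_0 c c' : (c' \in f0 c) = hp_a c' && (pre_0 c' == c).
Proof. by case: c => [|[|c]]; case: c' => [|[|[|c']]]. Qed.
Lemma uniq_a c : uniq (alpha_f c). Proof. by case: c => [|[|c]]. Qed.
Lemma uniq_b c : uniq (beta_f c). Proof. by case: c => [|[|c]]. Qed.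
Lemma uniq_g c : uniq (gamma_f c). Proof. by case: c => [|[|c]]. Qed.
Lemma uniq_d c : uniq (delta_f c). Proof. by case: c => [|[|c]]. Qed.
Lemma uniq_0 c : uniq (f0 c). Proof. by case: c => [|[|c]]. Qed.
Lemma size_a c : (size (alpha_f c) <= 2)%N. Proof. by case: c => [|[|c]]. Qed.
Lemma size_b c : (size (beta_f c) <= 2)%N. Proof. by case: c => [|[|c]]. Qed.
Lemma size_g c : (size (gamma_f c) <= 2)%N. Proof. by case: c => [|[|c]]. Qed.
Lemma size_d c : (size (delta_f c) <= 2)%N. Proof. by case: c => [|[|c]]. Qed.
Lemma size_0 c : (size (f0 c) <= 2)%N. Proof. by case: c => [|[|c]]. Qed.

Section Aux2.
Variables (d : Order.disp_t) (T : orderType d).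
Local Notation G := (nat * T)%type.
Local Open Scope ring_scope.

Lemma S_all (p : pred G) u L : all p u -> ~~ all p L -> S u L = 0.
Proof.
move=> hu hL; apply/eqP; apply: contraNT hL => /S_ne0 [_ pu].
by rewrite -(perm_all _ pu).
Qed.

Lemma S_has (p : pred G) u L : has p u -> ~~ has p L -> S u L = 0.
Proof.
move=> hu hL; apply/eqP; apply: contraNT hL => /S_ne0 [_ pu].
by rewrite -(perm_has _ pu).
Qed.

Lemma S_size (u L : seq G) : size u != size L -> S u L = 0.
Proof.
move=> h; apply/eqP; apply: contraNT h => /S_ne0 [_ pu].
by rewrite (perm_size pu).
Qed.

Lemma coef_perm (B : zmodType) (x : ext_elt B T) K K' : perm_eq K K' -> coef x K = coef x K'.
Proof. by move=> pK; rewrite !coef_S; apply: eq_bigr => p _; rewrite (S_perm _ pK). Qed.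

Lemma ltg_neg (a b : G) : a != b -> ltg b a = ~~ ltg a b.
Proof.
move=> ab; case h: (ltg a b); first by rewrite (ltg_asym h).
by have := ltg_total ab; rewrite h.
Qed.

Fixpoint rp (R : G -> G -> bool) (s : seq G) : nat :=
  match s with [::] => 0%N | x :: s' => (count (R x) s' + rp R s')%N end.

Definition Rg (g : G -> G) (x y : G) := ltg (g y) (g x) != ltg y x.

Lemma count_xor (P Q : pred G) s :
  odd (count P s + count Q s) = odd (count (fun y => P y != Q y) s).
Proof.
elim: s => //= y s IH.
have -> : (P y + count P s + (Q y + count Q s) = (P y + Q y) + (count P s + count Q s))%N by lia.
by rewrite [LHS]oddD IH [RHS]oddD; case: (P y); case: (Q y).
Qed.

Lemma ninv_map_rp (g : G -> G) s : odd (ninv (map g s) + ninv s) = odd (rp (Rg g) s).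
Proof.
elim: s => //= x s IH.
rewrite count_map.
set cP := count _ s; set cQ := count _ s.
have -> : (cP + ninv (map g s) + (cQ + ninv s) = (cP + cQ) + (ninv (map g s) + ninv s))%N by lia.
by rewrite [LHS]oddD IH count_xor [RHS]oddD.
Qed.

Definition full (R : G -> G -> bool) (s : seq G) := (\sum_(x <- s) count (R x) s)%N.

Lemma full_rp (R : G -> G -> bool) (s : seq G) : {in s &, forall x y, x != y -> R x y = R y x} ->
  (forall x, R x x = false) -> uniq s -> full R s = (2 * rp R s)%N.
Proof.
elim: s => [|x s IH] hs hR; first by rewrite /full big_nil.
rewrite cons_uniq => /andP[xs us].
rewrite /full big_cons /= hR add0n.
have -> : (\sum_(y <- s) count (R y) (x :: s) = count (fun y => R y x) s + full R s)%N.
  rewrite /full /= big_split /=; congr (_ + _)%N.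
  by elim: (s) => [|y l IHl]; rewrite ?big_nil ?big_cons //= IHl.
rewrite IH //; last by move=> a b ha hb; apply: hs; rewrite inE ?ha ?hb orbT.
have -> : count (fun y => R y x) s = count (R x) s.
  apply: eq_in_count => y ys.
  have yx : y != x by apply: contraNneq xs => <-.
  by rewrite hs // !inE ?ys ?eqxx ?orbT.
by rewrite addnA addnn mulnDr !mul2n.
Qed.

Lemma rp_perm (R : G -> G -> bool) (s t : seq G) : {in s &, forall x y, x != y -> R x y = R y x} ->
  (forall x, R x x = false) -> uniq s -> perm_eq s t -> rp R s = rp R t.
Proof.
move=> hs hR us pst.
have ut : uniq t by rewrite -(perm_uniq pst).
have ht : {in t &, forall x y, x != y -> R x y = R y x}.
  by move=> x y xt yt; apply: hs; rewrite (perm_mem pst).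
have := full_rp hs hR us; have := full_rp ht hR ut.
have -> : full R s = full R t.
  rewrite /full (perm_big _ pst) /=; apply: eq_bigr => x _.
  by rewrite (permP pst).
lia.
Qed.

Lemma Rg_sym (g : G -> G) (s : seq G) : {in s &, injective g} ->
  {in s &, forall x y, x != y -> Rg g x y = Rg g y x}.
Proof.
move=> inj x y xs ys xy; rewrite /Rg.
have gxy : g x != g y by apply: contra xy => /eqP /(inj _ _ xs ys) ->.
by rewrite (ltg_neg xy) (ltg_neg gxy); case: (ltg x y); case: (ltg (g x) (g y)).
Qed.

Lemma Rg_irr (g : G -> G) x : Rg g x x = false.
Proof. by rewrite /Rg !ltg_irr. Qed.

Lemma ninv_sorted (s : seq G) : sorted (fun a b : G => ltg a b) s -> ninv s = 0%N.
Proof.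
elim: s => //= x s IH hp.
rewrite IH ?(path_sorted hp) // addn0.
have := order_path_min (@ltg_trans _ _) hp => /allP h.
by apply/eqP; rewrite -leqn0 leqNgt -has_count; apply/hasPn => y /h /ltg_asym ->.
Qed.

Definition t0 (i : T) : G := (0%N, i).
Definition t1 (i : T) : G := (1%N, i).

Lemma t0_inj : injective t0. Proof. by move=> a b []. Qed.
Lemma t1_inj : injective t1. Proof. by move=> a b []. Qed.

Lemma ninv_t01 (I : seq T) : ninv (map t0 I) = ninv (map t1 I).
Proof.
elim: I => //= x I ->; congr (_ + _)%N.
by rewrite !count_map; apply: eq_count => y; rewrite /t0 /t1 /ltg /=.
Qed.

Lemma S_t01 (I J : seq T) : S (map t0 I) (map t0 J) = S (map t1 I) (map t1 J).
Proof.
rewrite /S !(map_inj_uniq t0_inj, map_inj_uniq t1_inj) ninv_t01.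
have e (t : T -> G) : injective t -> perm_eq (map t I) (map t J) = perm_eq I J.
  move=> ti; apply/idP/idP; first exact: perm_map_inj.
  exact: perm_map.
by rewrite (e _ t0_inj) (e _ t1_inj).
Qed.

Lemma sorted_t0 (I : seq T) : sorted <%O I -> sorted (fun a b : G => ltg a b) (map t0 I).
Proof.
rewrite sorted_map; apply: sub_sorted => x y /= h.
by rewrite /ltg /= h.
Qed.

Lemma nuniq_snd (K : seq G) : uniq K -> ~~ uniq (map snd K) ->
  exists a b, [/\ a \in K, b \in K, a != b & a.2 = b.2].
Proof.
elim: K => //= x K IH /andP[xK uK] /nandP[/negbNE /mapP [y yK ey]|h].
  exists x, y; split; rewrite ?inE ?eqxx ?yK ?orbT //.
  by apply: contraNneq xK => ->.
have [a [b [aK bK ab e]]] := IH uK h.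
by exists a, b; split; rewrite ?inE ?aK ?bK ?orbT.
Qed.

End Aux2.
Arguments t0 {d T} i.
Arguments t1 {d T} i.

Lemma map_nuniq (T1 T2 : eqType) (h : T1 -> T2) (s : seq T1) a b :
  a \in s -> b \in s -> a != b -> h a = h b -> ~~ uniq (map h s).
Proof.
elim: s => //= y s IH; rewrite !inE => /orP[/eqP ea|ai] /orP[/eqP eb|bi] ab hab.
- by rewrite ea eb eqxx in ab.
- by rewrite negb_and negbK -ea hab map_f.
- by rewrite negb_and negbK -eb -hab map_f.
- by rewrite negb_and (IH ai bi ab hab) orbT.
Qed.

Local Open Scope ring_scope.
Section Main.
Variables (B : zmodType) (d : Order.disp_t) (T : orderType d) (r : nat)
  (chi : ext_elt B T).
Hypothesis r3 : (3 <= r)%N.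
Hypothesis hmid : in_mid_sum r chi.
Hypothesis hcoc : ext_eq (amap alpha_f chi ++ amap beta_f chi)
         (amap gamma_f chi ++ amap delta_f chi).
Local Notation G := (nat * T)%type.

Definition cc (K : seq G) := coef chi K.
Definition dd (K : seq G) := cc K *~ (-1) ^+ ninv K.

Lemma cc_dd K : cc K = dd K *~ (-1) ^+ ninv K.
Proof. by rewrite /dd -mulrzA -exprD -signr_odd addnn odd_double expr0 mulr1z. Qed.

Lemma cc_nuniq K : ~~ uniq K -> cc K = 0.
Proof. by move=> h; rewrite /cc coef_S big1 // => p _; rewrite S_nuniq ?mulr0z. Qed.

Lemma dd_nuniq K : ~~ uniq K -> dd K = 0.
Proof. by move=> h; rewrite /dd cc_nuniq ?mul0rz. Qed.

Lemma Rel (K : seq G) : all (hpa hp_b) K -> has (fun a : G => a.1 == 0%N) K ->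
  has (fun a : G => a.1 == 2%N) K -> dd (phi pre_b K) = dd (phi pre_g K).
Proof.
move=> hb h0 h2.
have := hcoc K; rewrite !coef_cat.
rewrite !(coef_amap spec_a uniq_a size_a) !(coef_amap spec_b uniq_b size_b).
rewrite !(coef_amap spec_g uniq_g size_g) !(coef_amap spec_d uniq_d size_d).
have -> : sig hp_a pre_a K = 0.
  rewrite /sig; case: ifP => // /allP ha; move/hasP: h2 => [a aK /eqP e].
  by have := ha a aK; rewrite /hpa /hp_a e.
have -> : sig hp_d pre_d K = 0.
  rewrite /sig; case: ifP => // /allP ha; move/hasP: h0 => [a aK /eqP e].
  by have := ha a aK; rewrite /hpa /hp_d e.
have hg : all (hpa hp_g) K by [].
rewrite !mulr0z add0r addr0 !sig_all // => h.
rewrite /dd -/(cc _) -/(cc _) in h *.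
have := congr1 (fun z => z *~ (-1) ^+ ninv K) h.
rewrite -!mulrzA -!exprD.
rewrite (@sgn_mod (_ + _ + _)%N (ninv (phi pre_b K))); last by lia.
by rewrite (@sgn_mod (_ + _ + _)%N (ninv (phi pre_g K))); last by lia.
Qed.


Definition mkK (x0 : T) (I : seq T) (k : nat -> nat) : seq G :=
  [seq (k j, nth x0 I j) | j <- iota 0 (size I)].

Lemma phi_mkK pre x0 I k : phi pre (mkK x0 I k) = mkK x0 I (pre \o k).
Proof. by rewrite /phi /mkK -map_comp. Qed.

Lemma mkK_ext x0 I k k' : k =1 k' -> mkK x0 I k = mkK x0 I k'.
Proof. by move=> e; apply: eq_map => j; rewrite e. Qed.

Lemma mem_mkK x0 I k j : (j < size I)%N -> (k j, nth x0 I j) \in mkK x0 I k.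
Proof. by move=> hj; apply: (map_f (fun j => (k j, nth x0 I j))); rewrite mem_iota. Qed.

Lemma mkK_snd x0 I k : map snd (mkK x0 I k) = I.
Proof. by rewrite /mkK -map_comp /= -/(mkseq _ _) mkseq_nth. Qed.

Lemma size_mkK x0 I k : size (mkK x0 I k) = size I.
Proof. by rewrite /mkK size_map size_iota. Qed.

Lemma uniq_mkK x0 I k : uniq I -> uniq (mkK x0 I k).
Proof. by move=> u; apply: (@map_uniq _ _ snd); rewrite mkK_snd. Qed.

Lemma mem_mkK_uniq x0 I k c i : uniq I ->
  ((c, i) \in mkK x0 I k) = (i \in I) && (c == k (index i I)).
Proof.
move=> uI; apply/mapP/andP => [[j]|[iI /eqP ->]].
  rewrite mem_iota add0n => /andP[_ hj] [-> ->].
  by rewrite mem_nth // index_uniq.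
by exists (index i I); rewrite ?mem_iota ?index_mem // nth_index.
Qed.

Definition DI x0 I (e : nat -> bool) := dd (mkK x0 I (fun j => nat_of_bool (e j))).

Lemma RelW x0 I (e e' : nat -> bool) : (forall j, e j -> e' j) ->
  (exists j, (j < size I)%N && e j) -> (exists j, (j < size I)%N && ~~ e' j) ->
  DI x0 I e = DI x0 I e'.
Proof.
move=> ee [j1 /andP[h1 ej1]] [j0 /andP[h0 ej0]].
pose k j := if e j then 2%N else if e' j then 1%N else 0%N.
have := Rel (K := mkK x0 I k).
rewrite !phi_mkK /DI.
rewrite (mkK_ext _ _ (k := pre_b \o k) (k' := fun j => nat_of_bool (e j))); last first.
  by move=> j; rewrite /= /k /pre_b; case: (e j); case: (e' j).
rewrite (mkK_ext _ _ (k := pre_g \o k) (k' := fun j => nat_of_bool (e' j))); last first.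
  move=> j; rewrite /= /k /pre_g; have := ee j.
  by case: (e j); case: (e' j) => // ->.
apply.
- by apply/allP => a /mapP [j _ ->]; rewrite /hpa /hp_b /k /=; case: (e j); case: (e' j).
- apply/hasP; exists (k j0, nth x0 I j0); first exact: mem_mkK.
  by rewrite /k /= (negbTE ej0); case: (e j0) (ee j0) ej0 => // ->.
- apply/hasP; exists (k j1, nth x0 I j1); first exact: mem_mkK.
  by rewrite /k /= ej1.
Qed.

Lemma chain x0 I (e : nat -> bool) : size I = r ->
  (exists j, (j < r)%N && e j) -> (exists j, (j < r)%N && ~~ e j) ->
  DI x0 I e = DI x0 I (fun j => j != 0%N).
Proof.
move=> sI h1 h0; rewrite -sI in h1 h0.
have r0 : (0 < size I)%N by rewrite sI; lia.
have r1 : (1 < size I)%N by rewrite sI; lia.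
have r2 : (2 < size I)%N by rewrite sI; lia.
case e0: (e 0%N).
  rewrite -(@RelW x0 I (fun j => j == 0%N) e); first last.
  - exact: h0.
  - by exists 0%N; rewrite r0.
  - by move=> j /eqP ->.
  rewrite (@RelW x0 I (fun j => j == 0%N) (fun j => (j <= 1)%N)); first last.
  - by exists 2%N; rewrite r2.
  - by exists 0%N; rewrite r0.
  - by move=> j /eqP ->.
  rewrite -(@RelW x0 I (fun j => j == 1%N) (fun j => (j <= 1)%N)); first last.
  - by exists 2%N; rewrite r2.
  - by exists 1%N; rewrite r1.
  - by move=> j /eqP ->.
  apply: RelW.
  - by move=> j /eqP ->.
  - by exists 1%N; rewrite r1.
  - by exists 0%N; rewrite r0.
apply: RelW.
- by move=> j ej; apply: contraTneq ej => ->; rewrite e0.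
- exact: h1.
- by exists 0%N; rewrite r0.
Qed.


Lemma overlap (L : seq G) i : uniq L -> all (hpa hp_a) L -> size L = r ->
  (0%N, i) \in L -> (1%N, i) \in L -> cc L = 0.
Proof.
move=> uL hL sL i0 i1.
rewrite cc_dd; suff -> : dd L = 0 by rewrite mul0rz.
have n01 : (0%N, i) != (1%N, i) by [].
case: (boolP (has (fun a : G => (a.1 == 1%N) && (a != (1%N, i))) L)) => [/hasP [b bL /andP[b1 bi]] | hn].
  pose g (a : G) := if (a.1 == 1%N) && (a != (1%N, i)) then (2%N, a.2) else a.
  have ePhi : phi pre_g (map g L) = L.
    rewrite /phi -map_comp map_id_in // => a aL /=.
    have := allP hL a aL; rewrite /hpa /hp_a /g /pl.
    case: a aL => [[|[|a1]] a2] //= aL _; by case: ifP.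
  have := @Rel (map g L); rewrite ePhi => <-.
  - apply: dd_nuniq; rewrite /phi -map_comp.
    by apply: (map_nuniq i0 i1 n01); rewrite /comp /g /pl /= ?eqxx.
  - apply/allP => z /mapP [a aL ->]; have := allP hL a aL.
    by rewrite /g /hpa /hp_a /hp_b; case: ifP => //= _ h; lia.
  - by apply/hasP; exists (g (0%N, i)); [exact: map_f | rewrite /g].
  - by apply/hasP; exists (g b); [exact: map_f | rewrite /g b1 bi].
case: (boolP (has (fun a : G => (a.1 == 0%N) && (a != (0%N, i))) L)) => [/hasP [b bL /andP[b0 bi]] | hn0].
  pose g (a : G) := if a.1 == 1%N then (2%N, a.2) else if a == (0%N, i) then (1%N, i) else a.
  have ePhi : phi pre_b (map g L) = L.
    rewrite /phi -map_comp map_id_in // => a aL /=.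
    have := allP hL a aL; rewrite /hpa /hp_a /g /pl.
    case: a aL => [[|[|a1]] a2] //= aL _; case: ifP => //.
    by move/eqP => [->].
  have := @Rel (map g L); rewrite ePhi => ->.
  - apply: dd_nuniq; rewrite /phi -map_comp.
    by apply: (map_nuniq i0 i1 n01); rewrite /comp /g /pl /= ?eqxx.
  - apply/allP => z /mapP [a aL ->]; have := allP hL a aL.
    by rewrite /g /hpa /hp_a /hp_b; case: ifP => //= _ h; case: ifP => //= _; lia.
  - by apply/hasP; exists (g b); [exact: map_f | rewrite /g (eqP b0) /= (negbTE bi)].
  - by apply/hasP; exists (g (1%N, i)); [exact: map_f | rewrite /g].
exfalso.
have sub : {subset L <= [:: (0%N, i); (1%N, i)]}.
  move=> a aL; move/hasPn: hn => /(_ a aL) h1; move/hasPn: hn0 => /(_ a aL) h0.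
  have := allP hL a aL; rewrite /hpa /hp_a !inE.
  case: a {aL} h1 h0 => [[|[|a1]] a2] //= h1 h0 _; rewrite ?negbK in h1 h0;
  by rewrite ?h0 ?h1 ?orbT.
by have := uniq_leq_size uL sub; rewrite sL /=; lia.
Qed.


Lemma coef_SI (b : B) (I : seq T) (K : seq G) : coef (SI_term b I) K =
  (b *~ S (map t0 I) (phi pre_0 K)) *~ sig hp_a pre_0 K
  - b *~ S (map t0 I) K - b *~ S (map t1 I) K.
Proof.
rewrite /SI_term coef_cat (coef_amap spec_0 uniq_0 size_0) coef_seq1.
rewrite coef_S big_cons big_seq1 /= !mulNrz addrA.
by [].
Qed.

Lemma cc0 (K : seq G) : (forall p, p \in chi -> S p.2 K = 0) -> cc K = 0.
Proof. by move=> h; rewrite /cc coef_S big1_seq // => p /= /h ->; rewrite mulr0z. Qed.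

Lemma hmP (p : B * seq G) : p \in chi -> [/\ size p.2 = r, all (hpa hp_a) p.2 &
  (0 < count (fun g : G => g.1 == 0%N) p.2 < r)%N].
Proof.
move=> pc; have := allP hmid p pc => /and3P [/eqP s1 a1 c1].
by split.
Qed.

Lemma phi0E (K : seq G) : phi pre_0 K = map t0 (map snd K).
Proof. by rewrite /phi -map_comp. Qed.

Definition bI (I : seq T) : B := if I is i :: _ then DI i I (fun j => j != 0%N) else 0.
Definition sortI (u : seq G) := sort <=%O (map snd u).
Definition Is := undup (filter (fun I : seq T => sorted <%O I && (size I == r))
   (map (fun p : B * seq G => sortI p.2) chi)).

Lemma IsP (I : seq T) : I \in Is -> sorted <%O I /\ size I = r.
Proof. by rewrite mem_undup mem_filter => /andP[/andP[h /eqP s] _]. Qed.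

Lemma mkK_x0 (x0 x1 : T) (I : seq T) k : mkK x0 I k = mkK x1 I k.
Proof.
rewrite /mkK; apply/eq_in_map => j; rewrite mem_iota add0n => /andP[_ hj].
by rewrite (set_nth_default x1 x0 hj).
Qed.

Definition tm (K : seq G) (I : seq T) :=
  (bI I *~ S (map t0 I) (phi pre_0 K)) *~ sig hp_a pre_0 K
  - bI I *~ S (map t0 I) K - bI I *~ S (map t1 I) K.

Lemma hasc1 (u : seq G) : all (hpa hp_a) u ->
  (count (fun g : G => g.1 == 0%N) u < size u)%N -> has (fun a : G => a.1 == 1%N) u.
Proof.
elim: u => //= a u IH /andP[ha hu].
case: a ha => [[|[|a1]] a2] //= _.
by rewrite add1n ltnS => h; apply: IH.
Qed.

Lemma notall (p q : pred G) (s : seq G) : (forall a, q a -> ~~ p a) -> has q s -> ~~ all p s.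
Proof. by move=> h /hasP [a aK qa]; apply/allPn; exists a => //; apply: h. Qed.

Lemma bI_DI (x0 : T) (I0 : seq T) : (0 < size I0)%N ->
  bI I0 = DI x0 I0 (fun j => j != 0%N).
Proof. by case: I0 => // i I0 _; rewrite /bI /DI (mkK_x0 i x0). Qed.

Lemma main_ext (K : seq G) : cc K = \sum_(I <- Is) tm K I.
Proof.
have hIs I : I \in Is -> (0 < size I)%N by move/IsP => [_ ->]; lia.
case uK: (uniq K); last first.
  rewrite cc_nuniq ?uK // big1_seq // => I _.
  rewrite /tm !S_nuniq ?uK ?mulr0z ?mul0rz ?subr0 //.
  by apply: contraFN uK; apply: map_uniq.
case hK: (all (hpa hp_a) K); last first.
  rewrite cc0; last by move=> p /hmP [_ h _]; rewrite (S_all h) ?hK.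
  rewrite big1_seq // => I _; rewrite /tm /sig hK mulr0z.
  have a0 : all (hpa hp_a) (map t0 I) by rewrite all_map; apply/allP => i _.
  have a1 : all (hpa hp_a) (map t1 I) by rewrite all_map; apply/allP => i _.
  by rewrite (S_all a0) ?(S_all a1) ?hK // !mulr0z !subr0.
case sK: (size K == r); last first.
  rewrite cc0; last by move=> p /hmP [h _ _]; rewrite S_size // h eq_sym sK.
  rewrite big1_seq // => I /IsP [_ sI]; rewrite /tm.
  have n0 : size (map t0 I) != size (phi pre_0 K) by rewrite /phi !size_map sI eq_sym sK.
  have n1 : size (map t0 I) != size K by rewrite size_map sI eq_sym sK.
  have n2 : size (map t1 I) != size K by rewrite size_map sI eq_sym sK.
  by rewrite (S_size n0) (S_size n1) (S_size n2) !mulr0z !mul0rz !subr0.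
move/eqP: sK => sK.
have c01 : forall a : G, (a.1 == 1%N) -> ~~ (a.1 == 0%N) by move=> a /eqP ->.
have c10 : forall a : G, (a.1 == 0%N) -> ~~ (a.1 == 1%N) by move=> a /eqP ->.
case h1: (has (fun a : G => a.1 == 1%N) K); last first.
  rewrite cc0; last first.
    move=> p /hmP [s1 a1 /andP[_ c1]]; apply: S_has (negbT h1).
    by apply: hasc1; rewrite // s1.
  have eK : map t0 (map snd K) = K.
    rewrite -map_comp map_id_in // => a aK; have := allP hK a aK.
    have := hasPn (negbT h1) a aK.
    by case: a aK => [[|[|a1]] a2].
  rewrite big1_seq // => I /hIs sI; rewrite /tm phi0E eK sig_all // phi0E eK.
  rewrite addnn -signr_odd odd_double expr0 mulr1z.
  have ht : has (fun a : G => a.1 == 1%N) (map t1 I).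
    by case: I sI => // i I _; rewrite /= eqxx.
  by rewrite (S_has ht (negbT h1)) mulr0z subr0 subrr.
case h0: (has (fun a : G => a.1 == 0%N) K); last first.
  rewrite cc0; last first.
    move=> p /hmP [s1 a1 /andP[c0 _]]; apply: S_has (negbT h0).
    by rewrite has_count.
  have eK : map t1 (map snd K) = K.
    rewrite -map_comp map_id_in // => a aK; have := allP hK a aK.
    have := hasPn (negbT h0) a aK.
    by case: a aK => [[|[|a1]] a2].
  have sg1 : sig hp_a pre_0 K = 1.
    by rewrite sig_all // phi0E -{1}eK -ninv_t01 addnn -signr_odd odd_double.
  rewrite big1_seq // => I /hIs sI; rewrite /tm sg1 mulr1z phi0E.
  have ht : has (fun a : G => a.1 == 0%N) (map t0 I).
    by case: I sI => // i I _; rewrite /= eqxx.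
  rewrite (S_has ht (negbT h0)) mulr0z subr0.
  by rewrite -{2}eK S_t01 subrr.
case uJ: (uniq (map snd K)); last first.
  have [a [b [aK bK ab e]]] := nuniq_snd uK (negbT uJ).
  have [i [i0 i1]] : exists i, (0%N, i) \in K /\ (1%N, i) \in K.
    move: aK bK ab e (allP hK a aK) (allP hK b bK).
    case: a => [[|[|a1]] ai]; case: b => [[|[|b1]] bi] //= aK bK ab e _ _;
      rewrite e in aK ab *; rewrite ?eqxx // in ab.
    + by exists bi.
    + by exists bi.
  rewrite (overlap uK hK sK i0 i1) big1_seq // => I _.
  rewrite /tm phi0E S_nuniq; last by rewrite map_inj_uniq ?uJ //; exact: t0_inj.
  have at0 : all (fun a : G => a.1 == 0%N) (map t0 I) by rewrite all_map; apply/allP.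
  have at1 : all (fun a : G => a.1 == 1%N) (map t1 I) by rewrite all_map; apply/allP.
  rewrite (S_all at0 (notall c01 h1)) (S_all at1 (notall c10 h0)).
  by rewrite !mulr0z !mul0rz !subr0.
have at0 (I0 : seq T) : all (fun a : G => a.1 == 0%N) (map t0 I0) by rewrite all_map; apply/allP.
have at1 (I0 : seq T) : all (fun a : G => a.1 == 1%N) (map t1 I0) by rewrite all_map; apply/allP.
have S1 (I0 : seq T) : S (map t0 I0) K = 0 by rewrite (S_all (at0 I0) (notall c01 h1)).
have S2 (I0 : seq T) : S (map t1 I0) K = 0 by rewrite (S_all (at1 I0) (notall c10 h0)).
have [a0 a0K /eqP a00] := hasP h0.
pose x0 := a0.2.
pose J := map snd K.
pose I := sort <=%O J.
have pIJ : perm_eq I J by rewrite /I perm_sort.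
have sI : sorted <%O I by rewrite /I sort_lt_sorted.
have uI : uniq I := lt_sorted_uniq sI.
have szI : size I = r by rewrite /I size_sort size_map.
have noboth i : (0%N, i) \in K -> (1%N, i) \in K -> False.
  move=> i0 i1; have n01 : (0%N, i) != (1%N, i) by [].
  by have := @map_nuniq _ _ snd K _ _ i0 i1 n01 erefl; rewrite uJ.
pose e j := (1%N, nth x0 I j) \in K.
have key i : i \in I -> e (index i I) = ((1%N, i) \in K) by move=> iI; rewrite /e nth_index.
pose W := mkK x0 I (fun j => nat_of_bool (e j)).
have pKW : perm_eq K W.
  apply: uniq_perm => //; first exact: uniq_mkK.
  case=> c i; rewrite mem_mkK_uniq //; apply/idP/andP.
    move=> cK; have iI : i \in I by rewrite (perm_mem pIJ); exact: (map_f snd cK).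
    split => //; rewrite key //.
    have := allP hK _ cK; rewrite /hpa /hp_a /=.
    case: c cK => [|[|c]] //= cK _.
      by case h: ((1%N, i) \in K) => //; have := noboth _ cK h.
    by rewrite cK.
  move=> [iI /eqP ->]; rewrite key //.
  case h: ((1%N, i) \in K) => //=.
  have : i \in J by rewrite -(perm_mem pIJ).
  case/mapP => [[b1 b2] bK /= eb]; subst i.
  have := allP hK _ bK; rewrite /hpa /hp_a /=.
  case: b1 bK => [|[|b1]] //= bK _.
  by rewrite bK in h.
have lhs : cc K = DI x0 I (fun j => j != 0%N) *~ (-1) ^+ ninv W.
  rewrite /cc (coef_perm _ pKW) -/(cc W) cc_dd.
  have -> : dd W = DI x0 I e by [].
  rewrite (@chain x0 I e szI) //.
    have [[b1 b2] bK /= /eqP eb1] := hasP h1.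
    rewrite eb1 in bK.
    have b2I : b2 \in I by rewrite (perm_mem pIJ); exact: (map_f snd bK).
    by exists (index b2 I); rewrite -szI index_mem b2I key.
  have a0I : a0.2 \in I by rewrite (perm_mem pIJ); exact: (map_f snd a0K).
  exists (index a0.2 I); rewrite -szI index_mem a0I key //.
  apply/negP => h; apply: (noboth a0.2) h.
  have e0 : a0 = (0%N, a0.2) by rewrite -a00 -surjective_pairing.
  by rewrite -e0.
have sgn : (-1) ^+ ninv W = (-1) ^+ (ninv K + ninv (phi pre_0 K)) :> int.
  rewrite -signr_odd -[RHS]signr_odd; congr (_ ^+ (nat_of_bool _)).
  have o1 : odd (ninv (phi pre_0 K) + ninv K) = odd (rp (Rg (pl pre_0)) K) := ninv_map_rp _ K.
  have o2 : odd (ninv (phi pre_0 W) + ninv W) = odd (rp (Rg (pl pre_0)) W) := ninv_map_rp _ W.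
  have injK : {in K &, injective (pl pre_0)}.
    move=> x y xK yK [] exy; apply/eqP; apply: contraTT uJ => nxy.
    exact: (map_nuniq xK yK nxy exy).
  rewrite (rp_perm (Rg_sym injK) (@Rg_irr _ _ _) uK pKW) in o1.
  rewrite phi0E mkK_snd ninv_sorted ?add0n in o2; last exact: sorted_t0.
  by rewrite o2 -o1 addnC.
have tm0 I' : I' \in Is -> I' != I -> tm K I' = 0.
  move=> I'in nI; rewrite /tm S1 S2 !mulr0z !subr0.
  case: (boolP (S (map t0 I') (phi pre_0 K) == 0)) => [/eqP -> | /S_ne0 [_ p]].
    by rewrite !mul0rz.
  exfalso; move: nI; apply/negP; rewrite negbK; apply/eqP.
  have [sI' _] := IsP I'in.
  apply: lt_sorted_eq => // z.
  rewrite (perm_mem pIJ); rewrite phi0E in p.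
  by rewrite (perm_mem (perm_map_inj (@t0_inj _ T) p)).
case: (boolP (I \in Is)) => Iin; last first.
  rewrite big1_seq; last first.
    move=> I' /andP[_ I'in]; apply: tm0 => //.
    by apply: contraNneq Iin => <-.
  apply: cc0 => p pc; apply/eqP; apply: contraNT Iin => /S_ne0 [_ pp].
  rewrite mem_undup mem_filter sI szI eqxx /=.
  apply/mapP; exists p => //; rewrite /sortI /I.
  by apply/perm_sort_leP; apply: perm_map; rewrite perm_sym.
rewrite lhs (bigD1_seq I) //= ?undup_uniq // big1_seq ?addr0; last first.
  by move=> I' /andP[nI I'in]; apply: tm0.
rewrite /tm S1 S2 !mulr0z !subr0 sig_all // sgn.
rewrite (bI_DI x0); last by rewrite szI; lia.
have -> : S (map t0 I) (phi pre_0 K) = 1.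
  rewrite /S phi0E map_inj_uniq ?uI; last exact: t0_inj.
  rewrite (perm_map t0 pIJ) ninv_sorted //; exact: sorted_t0.
by rewrite mulr1z.
Qed.

End Main.
Close Scope ring_scope.
Unset Implicit Arguments.

Theorem mainTheorem8 (B : algType rat) (Bd : int -> {pred B})
    (hB : graded_comm Bd) (d : Order.disp_t) (T : orderType d)
    (r : nat) (chi : ext_elt B T) :
  (3 <= r)%N ->
  in_mid_sum r chi ->
  ext_eq (amap alpha_f chi ++ amap beta_f chi)
         (amap gamma_f chi ++ amap delta_f chi) ->
  exists l : seq (B * seq T),
    all (fun p => sorted (fun i j : T => (i < j)%O) p.2 && (size p.2 == r)) l /\
    ext_eq chi (flatten [seq SI_term p.1 p.2 | p <- l]).
Proof.
move=> r3 hm hc.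
exists [seq (bI chi J, J) | J <- Is r chi]; split.
  apply/allP => p /mapP [I0 Iin ->] /=.
  by have [s sz] := IsP Iin; rewrite s sz eqxx.
move=> K; rewrite -/(cc chi K) (main_ext r3 hm hc) coef_flatten -map_comp big_map.
by apply: eq_bigr => I0 _ /=; rewrite coef_SI.
Qed.
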